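(* Let $d\in\mathbb N$, let $D\subset\mathbb R_+^d$ be a nonempty convex compact set, and let $\mathcal P\subset\mathbb R_+^d$ be a nonempty convex compact polytope. Then $$\inf_{\alpha\in\mathcal P}\max_{y\in D}\min_{i\in[d]}\frac{y_i}{\alpha_i}=\min_{\alpha\in\mathcal P}\max_{y\in D}\min_{i\in[d]}\frac{y_i}{\alpha_i}.$$ That is, the infimum is attained at some $\alpha\in\mathcal P$.
   Context: A ratio $\frac{y_i}{\alpha_i}$ with $\alpha_i=0$ is defined to be $+\infty$. In particular the inner quantity equals $+\infty$ at $\alpha=0$. *)

(* Defs.v *)
From HB Require Import structures.
From mathcomp Require Import all_boot all_order all_algebra.
From mathcomp Require Import all_classical all_reals all_analysis.
Set Implicit Arguments. Unset Strict Implicit. Unset Printing Implicit Defensive.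
Import Order.TTheory GRing.Theory Num.Theory.
Import numFieldNormedType.Exports.
Local Open Scope classical_set_scope.
Local Open Scope ring_scope.

(* Points of R^d are row vectors 'rV[R]_d; coordinate i of x is x 0 i. *)

Definition nonneg_orthant (R : realType) (d : nat) : set 'rV[R]_d :=
  [set x | forall i : 'I_d, 0 <= x 0 i].

Definition conv_hull_seq (R : realType) (d : nat) (s : seq 'rV[R]_d)
  : set 'rV[R]_d :=
  [set x | exists w : 'I_(size s) -> R,
     (forall j, 0 <= w j) /\ \sum_(j < size s) w j = 1 /\
     x = \sum_(j < size s) w j *: s`_j].

Definition polytope (R : realType) (d : nat) (P : set 'rV[R]_d) : Prop :=
  exists s : seq 'rV[R]_d, P = conv_hull_seq s.

Definition eratio (R : realType) (y a : R) : \bar R :=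
  if a == 0 then +oo%E else (y / a)%:E.

(* min_{i in [d]} y_i / alpha_i  (equals +oo when alpha = 0) *)
Definition min_ratio (R : realType) (d : nat) (alpha y : 'rV[R]_d) : \bar R :=
  \big[Order.min/+oo%E]_(i < d) eratio (y 0 i) (alpha 0 i).

Definition maxmin_ratio (R : realType) (d : nat) (D : set 'rV[R]_d)
  (alpha : 'rV[R]_d) : \bar R :=
  ereal_sup [set min_ratio alpha y | y in D].

(* Main.v *)
Require Import Defs.
From HB Require Import structures.
From mathcomp Require Import all_boot all_order all_algebra.
From mathcomp Require Import all_classical all_reals all_analysis.
From mathcomp Require Import ring lra.
Import Order.TTheory GRing.Theory Num.Theory.
Import numFieldNormedType.Exports.
Local Open Scope classical_set_scope.
Local Open Scope ring_scope.

Section S.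
Context {R : realType} {d : nat}.
Local Open Scope convex_scope.

Lemma conv_coord (p : {i01 R}) (x y : 'rV[R]_d) i :
  ((x : convex_lmodType 'rV[R]_d) <| p |> y) 0 i = p%:num * x 0 i + (1 - p%:num) * y 0 i.
Proof. by rewrite !mxE. Qed.

Lemma mr_ge (t : R) (a y : 'rV[R]_d) : (forall i, 0 <= a 0 i) ->
  (forall i, t * a 0 i <= y 0 i) -> (t%:E <= min_ratio a y)%E.
Proof.
move=> a0 H; apply: le_bigmin => [|i _]; first exact: leey.
rewrite /eratio; case: eqP => ai; first exact: leey.
have ai0 : 0 < a 0 i by rewrite lt_neqAle eq_sym; apply/andP; split => //; apply/eqP.
by rewrite lee_fin ler_pdivlMr.
Qed.

Lemma mr_le (t : R) (a y : 'rV[R]_d) : (forall i, 0 <= a 0 i) ->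
  (forall i, 0 <= y 0 i) -> (t%:E <= min_ratio a y)%E -> forall i, t * a 0 i <= y 0 i.
Proof.
move=> a0 y0 H i; have := le_trans H (bigmin_le _ i _).
rewrite /eratio; case: eqP => ai; first by rewrite ai mulr0.
have ai0 : 0 < a 0 i by rewrite lt_neqAle eq_sym; apply/andP; split => //; apply/eqP.
by rewrite lee_fin ler_pdivlMr.
Qed.

Lemma mr_ge0 (a y : 'rV[R]_d) : (forall i, 0 <= a 0 i) ->
  (forall i, 0 <= y 0 i) -> (0 <= min_ratio a y)%E.
Proof.
move=> a0 y0; apply: mr_ge => // i; by rewrite mul0r.
Qed.

Lemma mr_zero (a y : 'rV[R]_d) i : 0 < a 0 i -> y 0 i = 0 -> (min_ratio a y <= 0)%E.
Proof.
move=> ai yi; apply: le_trans (bigmin_le _ i _) _.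
by rewrite /eratio gt_eqF // yi mul0r.
Qed.
End S.
Local Open Scope convex_scope.

Theorem mainTheorem5 (R : realType) (d : nat) (D P : set 'rV[R]_d) :
  D !=set0 -> D `<=` @nonneg_orthant R d -> convex_set D -> compact D ->
  P !=set0 -> P `<=` @nonneg_orthant R d -> convex_set P -> compact P ->
  polytope P ->
  exists2 alpha0 : 'rV[R]_d, P alpha0 &
    maxmin_ratio D alpha0 = ereal_inf [set maxmin_ratio D alpha | alpha in P].
Proof.
move=> [y0 Dy0] Dpos Dcvx _ [a0 Pa0] Ppos _ Pcpt _.
set f := maxmin_ratio D.
have fge0 : forall a, P a -> (0 <= f a)%E.
  move=> a Pa; apply: (le_trans (mr_ge0 _ _ (Ppos _ Pa) (Dpos _ Dy0))).
  by apply: ereal_sup_ubound; exists y0.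
have T0 : (0 <= ereal_inf [set f a | a in P])%E.
  by apply: le_ereal_inf_tmp => _ [a Pa <-]; exact: fge0.
have [//|nex] := pselect (exists2 a, P a & f a = ereal_inf [set f a | a in P]).
have Tlt : forall a, P a -> (ereal_inf [set f a | a in P] < f a)%E.
  move=> a Pa; rewrite lt_neqAle; apply/andP; split.
    by apply/eqP => E; apply: nex; exists a.
  by apply: ereal_inf_lbound; exists a.
move: T0 Tlt; set T := ereal_inf _ => T0 Tlt.
case Te: T T0 Tlt => [r| |] T0 Tlt; last 2 first.
- by have := Tlt _ Pa0; rewrite ltNge leey.
- by [].
rewrite lee_fin in T0.
have H2 : forall b i, P b -> 0 < b 0 i -> exists2 y, D y & 0 < y 0 i.
  move=> b i Pb bi; apply: contrapT => nex2.
  have : (f b <= 0)%E.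
    apply: ge_ereal_sup => _ [y Dy <-]; apply: (mr_zero _ _ _ bi).
    apply/eqP; rewrite eq_le (Dpos _ Dy i) andbT leNgt; apply/negP => yi.
    by apply: nex2; exists y.
  by move=> fb; have := lt_le_trans (Tlt _ Pb) fb; rewrite lte_fin ltNge T0.
have [z Dz zpos] : exists2 z, D z &
    forall i, (exists2 y, D y & 0 < y 0 i) -> 0 < z 0 i.
  suff: forall k, exists2 z, D z &
      forall i : 'I_d, (i < k)%N -> (exists2 y, D y & 0 < y 0 i) -> 0 < z 0 i.
    by move=> /(_ d) [z Dz Hz]; exists z => // i; apply: Hz.
  elim=> [|k [z Dz Hz]]; first by exists y0.
  have [[w Dw [j /andP[/eqP jk wj]]]|nw] := pselect (exists2 w, D w &
       exists j : 'I_d, (j == k :> nat) && (0 < w 0 j)).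
    have h0 : 0 <= 1/2 :> R by lra.
    have h1 : 1/2 <= 1 :> R by lra.
    exists ((z : convex_lmodType 'rV[R]_d) <| Itv01 h0 h1 |> w).
      by rewrite -in_setE; apply: Dcvx; rewrite in_setE.
    move=> i; rewrite ltnS leq_eqVlt => /orP[/eqP ik|ik] ex.
      have -> : i = j by apply: val_inj; rewrite /= ik jk.
      rewrite conv_coord /=; have := Dpos _ Dz j; lra.
    rewrite conv_coord /=; have := Hz i ik ex; have := Dpos _ Dw i; lra.
  exists z => // i; rewrite ltnS leq_eqVlt => /orP[/eqP ik|ik] ex; last exact: Hz.
  by exfalso; apply: nw; case: ex => w Dw wi; exists w => //; exists i; rewrite ik eqxx.
have zP : forall b i, P b -> 0 < b 0 i -> 0 < z 0 i.
  by move=> b i Pb bi; apply: zpos; exact: H2 Pb bi.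
have /compact_near_coveringP cov := Pcpt.
have cv : \forall i \near r^'+, P `<=` (fun b => P b -> (i%:E <= f b)%E).
  apply: cov => // a Pa.
  have [_ [y Dy <-] ry] := ereal_sup_gt (Tlt _ Pa).
  have [s rs sle] : exists2 s, r < s & (s%:E <= min_ratio a y)%E.
    move: ry; case: (min_ratio a y) => [v| |] rv.
    - exists ((r + v) / 2); rewrite lte_fin in rv; first lra.
      by rewrite lee_fin; lra.
    - by exists (r + 1); [lra | exact: leey].
    - by [].
  have ya := mr_le _ _ _ (Ppos _ Pa) (Dpos _ Dy) sle.
  have s0 : 0 < s by lra.
  have l0 : 0 <= (s - r) / (2 * s) by apply: divr_ge0; lra.
  have l1 : (s - r) / (2 * s) <= 1 by rewrite ler_pdivrMr; lra.
  set lam := (s - r) / (2 * s) in l0 l1.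
  have lamE : (1 - lam) * s = (s + r) / 2.
    by rewrite /lam; field; rewrite gt_eqF.
  have lam0 : 0 < lam by rewrite /lam divr_gt0 //; lra.
  set m' := (3 * r + s) / 4.
  have m'0 : 0 < m' by rewrite /m'; lra.
  pose y' := (z : convex_lmodType 'rV[R]_d) <| Itv01 l0 l1 |> y.
  have Dy' : D y' by rewrite -in_setE; apply: Dcvx; rewrite in_setE.
  exists ([set b : 'rV[R]_d | forall k, 0 < z 0 k -> `|a 0 k - b 0 k| < lam * z 0 k / m'],
          [set j | r < j /\ j < m']).
    split => /=.
      apply: (@filter_forall _ 'I_d (fun k (b : 'rV[R]_d) => 0 < z 0 k -> `|a 0 k - b 0 k| < lam * z 0 k / m') (nbhs a) _) => k.
      have [zk|zk] := ltP 0 (z 0 k); last by apply: nearW.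
      have := @cvgr_dist_lt _ _ _ (nbhs a) _ (fun b : 'rV[R]_d => b 0 k) (a 0 k)
                (@coord_continuous _ _ _ _ _ a) (lam * z 0 k / m').
      move=> /(_ _) h; apply: filterS (h _) => [b hb _ //|].
      by rewrite divr_gt0 // mulr_gt0.
    apply: filterI; first exact: nbhs_right_gt.
    by apply: nbhs_right_lt; rewrite /m'; lra.
  move=> [b j] /= [Hb [rj jm]] Pb.
  apply: (le_trans _ (ereal_sup_ubound _)); last by exists y'.
  apply: mr_ge; first exact: Ppos.
  move=> k; rewrite conv_coord /=.
  have bk := Ppos _ Pb k; have ak := Ppos _ Pa k; have yk := ya k.
  have zk := Dpos _ Dz k.
  have [bk0|bk0] := eqVneq (b 0 k) 0.
    rewrite bk0 mulr0; apply: addr_ge0; apply: mulr_ge0 => //; first lra.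
    exact: Dpos.
  have bkp : 0 < b 0 k by rewrite lt_neqAle eq_sym bk0.
  have zkp := zP _ _ Pb bkp.
  have hk := Hb k zkp.
  have h1 : j * b 0 k <= m' * b 0 k by apply: ler_wpM2r => //; lra.
  have h2 : m' * (b 0 k - a 0 k) <= lam * z 0 k.
    have : b 0 k - a 0 k <= lam * z 0 k / m'.
      by apply: le_trans (ltW hk); rewrite distrC; apply: ler_norm.
    by rewrite ler_pdivlMr // mulrC.
  have h3 : m' * a 0 k <= (1 - lam) * (s * a 0 k).
    by rewrite mulrA lamE; apply: ler_wpM2r => //; rewrite /m'; lra.
  have h4 : (1 - lam) * (s * a 0 k) <= (1 - lam) * y 0 k.
    by apply: ler_wpM2l => //; lra.
  lra.
have [i [ri Hi]] := filter_ex (filterI (nbhs_right_gt r) cv).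
have := le_ereal_inf_tmp (S := [set f a | a in P]) (M := i%:E).
rewrite -/T Te lee_fin => h.
have : i <= r by apply: h => _ [b Pb <-]; exact: Hi.
by rewrite leNgt ri.
Qed.
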